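(* Let $\Omega=(0,l_x)\times(0,l_y)\times(0,l_z)$ be discretized by cubic cells of side $h=l_x/N_x=l_y/N_y=l_z/N_z$ with cell centers $(x_i,y_j,z_k)=((i-\tfrac12)h,(j-\tfrac12)h,(k-\tfrac12)h)$, $1\le i\le N_x$, $1\le j\le N_y$, $1\le k\le N_z$. Let $\epsilon>0$, $S>0$, $\Delta t>0$, $F(\phi)=\frac14(\phi^2-1)^2$, and let $g_{ijk}\ge 0$ be given grid values (in the paper $g_{ijk}=g(\mathbf{x}_{ijk})$ with $g=1-\phi_0^2+\lambda\ge\lambda>0$). Let $n\ge1$ and let grid functions $\phi^{n-1},\phi^n$ be given; set $\phi^*=\frac32\phi^n-\frac12\phi^{n-1}$. Suppose grid functions $\phi^{n+1},\mu^{n+\frac12}$ and a real number $Q^{n+\frac12}$ satisfy, for all $i,j,k$, $$\frac{\phi^{n+1}_{ijk}-\phi^n_{ijk}}{\Delta t}=-g_{ijk}\mu^{n+\frac12}_{ijk},$$ $$\mu^{n+\frac12}_{ijk}=Q^{n+\frac12}\frac{F'(\phi^*_{ijk})}{\epsilon^2}-\Delta_d\Big(\frac{\phi^{n+1}_{ijk}+\phi^n_{ijk}}{2}\Big)+S\Big(\frac{\phi^{n+1}_{ijk}+\phi^n_{ijk}}{2}-\phi^*_{ijk}\Big),$$ $$\big(F(\phi^{n+1})-F(\phi^n),\mathbf{1}\big)_h=Q^{n+\frac12}\big(F'(\phi^* ),\phi^{n+1}-\phi^n\big)_h,$$ where all grid functions satisfy the discrete homogeneous Neumann conditions described in the context.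 Then $$\frac{1}{\epsilon^2}\big(F(\phi^{n+1})-F(\phi^n),\mathbf{1}\big)_h+\frac12\big(\|\nabla_d\phi^{n+1}\|_e^2-\|\nabla_d\phi^n\|_e^2\big)+\frac S4\big(\|\phi^{n+1}-\phi^n\|_h^2-\|\phi^n-\phi^{n-1}\|_h^2\big)$$ $$=-\Delta t\,\|\sqrt{g}\,\mu^{n+\frac12}\|_h^2-\frac S4\|\phi^{n+1}-2\phi^n+\phi^{n-1}\|_h^2\le 0,$$ and consequently the discrete energy $$\tilde E(\phi^{n+1},\phi^n):=\frac{1}{\epsilon^2}\big(F(\phi^{n+1}),\mathbf{1}\big)_h+\frac12\|\nabla_d\phi^{n+1}\|_e^2+\frac S4\|\phi^{n+1}-\phi^n\|_h^2$$ satisfies $\tilde E(\phi^{n+1},\phi^n)\le\tilde E(\phi^n,\phi^{n-1})$ (unconditional energy stability, for any $\Delta t>0$).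
   Context: Discrete Neumann conditions (ghost values): $\phi_{0,jk}=\phi_{1,jk}$, $\phi_{N_x+1,jk}=\phi_{N_x,jk}$, $\phi_{i,0,k}=\phi_{i,1,k}$, $\phi_{i,N_y+1,k}=\phi_{i,N_y,k}$, $\phi_{ij,0}=\phi_{ij,1}$, $\phi_{ij,N_z+1}=\phi_{ij,N_z}$, and likewise for $\mu$. The discrete Laplacian is $\Delta_d\phi_{ijk}=(\phi_{i+1,jk}+\phi_{i-1,jk}+\phi_{i,j+1,k}+\phi_{i,j-1,k}+\phi_{ij,k+1}+\phi_{ij,k-1}-6\phi_{ijk})/h^2$. Inner products: $(\phi,\psi)_h=h^3\sum_{i=1}^{N_x}\sum_{j=1}^{N_y}\sum_{k=1}^{N_z}\phi_{ijk}\psi_{ijk}$, $\|\phi\|_h^2=(\phi,\phi)_h$, $\mathbf{1}$ is the grid function identically $1$, and $\sqrt{g}\mu$ denotes the grid function $\sqrt{g_{ijk}}\mu_{ijk}$. With $D_x\phi_{i+\frac12,jk}=(\phi_{i+1,jk}-\phi_{ijk})/h$ and analogously $D_y,D_z$, $(\nabla_d\phi,\nabla_d\psi)_e=h^3\big(\sum_{i=0}^{N_x}\sum_{j=1}^{N_y}\sum_{k=1}^{N_z}D_x\phi_{i+\frac12,jk}D_x\psi_{i+\frac12,jk}+\sum_{i=1}^{N_x}\sum_{j=0}^{N_y}\sum_{k=1}^{N_z}D_y\phi_{i,j+\frac12,k}D_y\psi_{i,j+\frac12,k}+\sum_{i=1}^{N_x}\sum_{j=1}^{N_y}\sum_{k=0}^{N_z}D_z\phi_{ij,k+\frac12}D_z\psi_{ij,k+\frac12}\big)$,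 and $\|\nabla_d\phi\|_e^2=(\nabla_d\phi,\nabla_d\phi)_e$. *)

(* Defs.v *)
From HB Require Import structures.
From mathcomp Require Import all_boot all_order all_algebra.
Set Implicit Arguments. Unset Strict Implicit. Unset Printing Implicit Defensive.
Import Order.TTheory GRing.Theory Num.Theory.
Local Open Scope ring_scope.

(* A grid function: values phi i j k, with interior indices 1..N and
   ghost indices 0 and N+1 (other indices are irrelevant). *)
Definition gridfun (R : Type) := nat -> nat -> nat -> R.

Section Grid.
Variable R : rcfType.
Variables (Nx Ny Nz : nat) (h : R).

Definition neumann (phi : gridfun R) : Prop :=
  (forall j k, (1 <= j <= Ny)%N -> (1 <= k <= Nz)%N ->
     phi 0%N j k = phi 1%N j k /\ phi Nx.+1 j k = phi Nx j k) /\
  (forall i k, (1 <= i <= Nx)%N -> (1 <= k <= Nz)%N ->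
     phi i 0%N k = phi i 1%N k /\ phi i Ny.+1 k = phi i Ny k) /\
  (forall i j, (1 <= i <= Nx)%N -> (1 <= j <= Ny)%N ->
     phi i j 0%N = phi i j 1%N /\ phi i j Nz.+1 = phi i j Nz).

Definition lapd (phi : gridfun R) (i j k : nat) : R :=
  (phi i.+1 j k + phi i.-1 j k + phi i j.+1 k + phi i j.-1 k
   + phi i j k.+1 + phi i j k.-1 - 6%:R * phi i j k) / h ^+ 2.

Definition iph (phi psi : gridfun R) : R :=
  h ^+ 3 * \sum_(1 <= i < Nx.+1) \sum_(1 <= j < Ny.+1) \sum_(1 <= k < Nz.+1)
    phi i j k * psi i j k.

Definition normh2 (phi : gridfun R) : R := iph phi phi.

(* Difference quotients on faces: D_x phi_{i+1/2,jk} indexed by i, etc. *)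
Definition Dx (phi : gridfun R) i j k : R := (phi i.+1 j k - phi i j k) / h.
Definition Dy (phi : gridfun R) i j k : R := (phi i j.+1 k - phi i j k) / h.
Definition Dz (phi : gridfun R) i j k : R := (phi i j k.+1 - phi i j k) / h.

Definition ipe (phi psi : gridfun R) : R :=
  h ^+ 3 * (
    \sum_(0 <= i < Nx.+1) \sum_(1 <= j < Ny.+1) \sum_(1 <= k < Nz.+1)
      Dx phi i j k * Dx psi i j k
  + \sum_(1 <= i < Nx.+1) \sum_(0 <= j < Ny.+1) \sum_(1 <= k < Nz.+1)
      Dy phi i j k * Dy psi i j k
  + \sum_(1 <= i < Nx.+1) \sum_(1 <= j < Ny.+1) \sum_(0 <= k < Nz.+1)
      Dz phi i j k * Dz psi i j k).

Definition normgrad2 (phi : gridfun R) : R := ipe phi phi.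

End Grid.

Definition Fdw (R : rcfType) (x : R) : R := (x ^+ 2 - 1) ^+ 2 / 4%:R.
Definition dFdw (R : rcfType) (x : R) : R := x ^+ 3 - x.

Definition one_grid (R : rcfType) : gridfun R := fun _ _ _ => 1.

Definition Etilde (R : rcfType) (Nx Ny Nz : nat) (h eps S : R)
  (phi1 phi0 : gridfun R) : R :=
  iph Nx Ny Nz h (fun i j k => Fdw (phi1 i j k)) (one_grid R) / eps ^+ 2
  + normgrad2 Nx Ny Nz h phi1 / 2%:R
  + S / 4%:R * normh2 Nx Ny Nz h (fun i j k => phi1 i j k - phi0 i j k).

(* Main.v *)
Require Import Defs.
From HB Require Import structures.
From mathcomp Require Import all_boot all_order all_algebra.
From mathcomp Require Import ring lra.
Set Implicit Arguments. Unset Strict Implicit. Unset Printing Implicit Defensive.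
Import Order.TTheory GRing.Theory Num.Theory.
Local Open Scope ring_scope.

Definition S3 (R : rcfType) (Nx Ny Nz a b c : nat) (f : gridfun R) : R :=
  \sum_(a <= i < Nx.+1) \sum_(b <= j < Ny.+1) \sum_(c <= k < Nz.+1) f i j k.

Lemma S3_ext (R : rcfType) Nx Ny Nz a b c (f g : gridfun R) :
  (forall i j k, (a <= i <= Nx)%N -> (b <= j <= Ny)%N -> (c <= k <= Nz)%N -> f i j k = g i j k) ->
  S3 Nx Ny Nz a b c f = S3 Nx Ny Nz a b c g.
Proof.
move=> H; rewrite /S3; apply: eq_big_nat => i /andP[ai iN].
apply: eq_big_nat => j /andP[bj jN]; apply: eq_big_nat => k /andP[ck kN].
by apply: H; apply/andP; split.
Qed.

Lemma S3D (R : rcfType) Nx Ny Nz a b c (f g : gridfun R) :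
  S3 Nx Ny Nz a b c (fun i j k => f i j k + g i j k) =
  S3 Nx Ny Nz a b c f + S3 Nx Ny Nz a b c g.
Proof.
rewrite /S3 -big_split; apply: eq_bigr => i _.
rewrite -big_split; apply: eq_bigr => j _; by rewrite -big_split.
Qed.

Lemma S3Z (R : rcfType) Nx Ny Nz a b c (x : R) (f : gridfun R) :
  S3 Nx Ny Nz a b c (fun i j k => x * f i j k) = x * S3 Nx Ny Nz a b c f.
Proof.
rewrite /S3 mulr_sumr; apply: eq_bigr => i _.
rewrite mulr_sumr; apply: eq_bigr => j _; by rewrite mulr_sumr.
Qed.

Lemma S3N (R : rcfType) Nx Ny Nz a b c (f : gridfun R) :
  S3 Nx Ny Nz a b c (fun i j k => - f i j k) = - S3 Nx Ny Nz a b c f.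
Proof.
rewrite -mulN1r -S3Z; apply: S3_ext => *; by rewrite mulN1r.
Qed.

Lemma S3B (R : rcfType) Nx Ny Nz a b c (f g : gridfun R) :
  S3 Nx Ny Nz a b c (fun i j k => f i j k - g i j k) =
  S3 Nx Ny Nz a b c f - S3 Nx Ny Nz a b c g.
Proof. by rewrite S3D S3N. Qed.

Lemma S3_ge0 (R : rcfType) Nx Ny Nz a b c (f : gridfun R) :
  S3 Nx Ny Nz a b c (fun i j k => f i j k * f i j k) >= 0.
Proof.
rewrite /S3; apply: sumr_ge0 => i _; apply: sumr_ge0 => j _; apply: sumr_ge0 => k _.
by rewrite -expr2 sqr_ge0.
Qed.

Lemma iphE (R : rcfType) Nx Ny Nz h (f g : gridfun R) :
  iph Nx Ny Nz h f g = h ^+ 3 * S3 Nx Ny Nz 1 1 1 (fun i j k => f i j k * g i j k).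
Proof. by []. Qed.

Lemma teleB (R : rcfType) (N : nat) (B : nat -> nat -> R) :
  \sum_(1 <= i < N.+1) (B i i - B i.-1 i) =
  B N N.+1 - B 0%N 0%N - \sum_(0 <= i < N.+1) (B i i.+1 - B i i).
Proof.
elim: N => [|N IH].
  by rewrite big_geq // big_nat1; ring.
rewrite big_nat_recr //= IH [in RHS]big_nat_recr //=; ring.
Qed.
Lemma sbpx (R : rcfType) Nx Ny Nz (u v : gridfun R) : neumann Nx Ny Nz u ->
  S3 Nx Ny Nz 1 1 1 (fun i j k => (u i.+1 j k + u i.-1 j k - 2%:R * u i j k) * v i j k)
  = - S3 Nx Ny Nz 0 1 1 (fun i j k => (u i.+1 j k - u i j k) * (v i.+1 j k - v i j k)).
Proof.
move=> [Hx _].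
pose B a b := \sum_(1 <= j < Ny.+1) \sum_(1 <= k < Nz.+1) (u a.+1 j k - u a j k) * v b j k.
have E1 : S3 Nx Ny Nz 1 1 1 (fun i j k => (u i.+1 j k + u i.-1 j k - 2%:R * u i j k) * v i j k)
   = \sum_(1 <= i < Nx.+1) (B i i - B i.-1 i).
  rewrite /S3; apply: eq_big_nat => i /andP[i1 _].
  rewrite /B -sumrB; apply: eq_bigr => j _; rewrite -sumrB; apply: eq_bigr => k _.
  rewrite prednK //; ring.
have E2 : S3 Nx Ny Nz 0 1 1 (fun i j k => (u i.+1 j k - u i j k) * (v i.+1 j k - v i j k))
   = \sum_(0 <= i < Nx.+1) (B i i.+1 - B i i).
  rewrite /S3; apply: eq_bigr => i _.
  rewrite /B -sumrB; apply: eq_bigr => j _; rewrite -sumrB; apply: eq_bigr => k _.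
  ring.
rewrite E1 E2 teleB.
have -> : B Nx Nx.+1 = 0.
  rewrite /B big1_seq // => j; rewrite mem_index_iota => /andP[j1 j2].
  rewrite big1_seq // => k; rewrite mem_index_iota => /andP[k1 k2].
  have [_ ->] := Hx j k (introT andP (conj j1 j2)) (introT andP (conj k1 k2)).
  by rewrite subrr mul0r.
have -> : B 0%N 0%N = 0.
  rewrite /B big1_seq // => j; rewrite mem_index_iota => /andP[j1 j2].
  rewrite big1_seq // => k; rewrite mem_index_iota => /andP[k1 k2].
  have [-> _] := Hx j k (introT andP (conj j1 j2)) (introT andP (conj k1 k2)).
  by rewrite subrr mul0r.
by rewrite subrr sub0r.
Qed.

Lemma sbpy (R : rcfType) Nx Ny Nz (u v : gridfun R) : neumann Nx Ny Nz u ->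
  S3 Nx Ny Nz 1 1 1 (fun i j k => (u i j.+1 k + u i j.-1 k - 2%:R * u i j k) * v i j k)
  = - S3 Nx Ny Nz 1 0 1 (fun i j k => (u i j.+1 k - u i j k) * (v i j.+1 k - v i j k)).
Proof.
move=> [_ [Hy _]].
rewrite /S3 -sumrN; apply: eq_big_nat => i /andP[i1 i2].
pose B a b := \sum_(1 <= k < Nz.+1) (u i a.+1 k - u i a k) * v i b k.
have E1 : \sum_(1 <= j < Ny.+1) \sum_(1 <= k < Nz.+1) (u i j.+1 k + u i j.-1 k - 2%:R * u i j k) * v i j k
   = \sum_(1 <= j < Ny.+1) (B j j - B j.-1 j).
  apply: eq_big_nat => j /andP[j1 _].
  rewrite /B -sumrB; apply: eq_bigr => k _.
  rewrite prednK //; ring.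
have E2 : \sum_(0 <= j < Ny.+1) \sum_(1 <= k < Nz.+1) (u i j.+1 k - u i j k) * (v i j.+1 k - v i j k)
   = \sum_(0 <= j < Ny.+1) (B j j.+1 - B j j).
  apply: eq_bigr => j _.
  rewrite /B -sumrB; apply: eq_bigr => k _.
  ring.
rewrite E1 E2 teleB.
have -> : B Ny Ny.+1 = 0.
  rewrite /B big1_seq // => k; rewrite mem_index_iota => /andP[k1 k2].
  have [_ ->] := Hy i k (introT andP (conj i1 i2)) (introT andP (conj k1 k2)).
  by rewrite subrr mul0r.
have -> : B 0%N 0%N = 0.
  rewrite /B big1_seq // => k; rewrite mem_index_iota => /andP[k1 k2].
  have [-> _] := Hy i k (introT andP (conj i1 i2)) (introT andP (conj k1 k2)).
  by rewrite subrr mul0r.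
by rewrite subrr sub0r.
Qed.

Lemma sbpz (R : rcfType) Nx Ny Nz (u v : gridfun R) : neumann Nx Ny Nz u ->
  S3 Nx Ny Nz 1 1 1 (fun i j k => (u i j k.+1 + u i j k.-1 - 2%:R * u i j k) * v i j k)
  = - S3 Nx Ny Nz 1 1 0 (fun i j k => (u i j k.+1 - u i j k) * (v i j k.+1 - v i j k)).
Proof.
move=> [_ [_ Hz]].
rewrite /S3 -sumrN; apply: eq_big_nat => i /andP[i1 i2].
rewrite -sumrN; apply: eq_big_nat => j /andP[j1 j2].
pose B a b := (u i j a.+1 - u i j a) * v i j b.
have E1 : \sum_(1 <= k < Nz.+1) (u i j k.+1 + u i j k.-1 - 2%:R * u i j k) * v i j k
   = \sum_(1 <= k < Nz.+1) (B k k - B k.-1 k).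
  apply: eq_big_nat => k /andP[k1 _].
  rewrite /B prednK //; ring.
have E2 : \sum_(0 <= k < Nz.+1) (u i j k.+1 - u i j k) * (v i j k.+1 - v i j k)
   = \sum_(0 <= k < Nz.+1) (B k k.+1 - B k k).
  apply: eq_bigr => k _; rewrite /B; ring.
rewrite E1 E2 teleB.
have [H0 HN] := Hz i j (introT andP (conj i1 i2)) (introT andP (conj j1 j2)).
by rewrite /B HN H0 !subrr !mul0r subrr sub0r.
Qed.

Lemma sbp (R : rcfType) Nx Ny Nz h (u v : gridfun R) : neumann Nx Ny Nz u ->
  iph Nx Ny Nz h (lapd h u) v = - ipe Nx Ny Nz h u v.
Proof.
move=> Hu.
rewrite iphE /ipe.
have -> : S3 Nx Ny Nz 1 1 1 (fun i j k => lapd h u i j k * v i j k) =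
  (S3 Nx Ny Nz 1 1 1 (fun i j k => (u i.+1 j k + u i.-1 j k - 2%:R * u i j k) * v i j k)
  + S3 Nx Ny Nz 1 1 1 (fun i j k => (u i j.+1 k + u i j.-1 k - 2%:R * u i j k) * v i j k)
  + S3 Nx Ny Nz 1 1 1 (fun i j k => (u i j k.+1 + u i j k.-1 - 2%:R * u i j k) * v i j k)) / h ^+ 2.
  rewrite -!S3D mulrC -S3Z; apply: S3_ext => i j k _ _ _; rewrite /lapd; ring.
rewrite sbpx // sbpy // sbpz //.
have SD : forall (a b c : nat) (F G : gridfun R),
  S3 Nx Ny Nz a b c (fun i j k => F i j k / h * (G i j k / h)) =
  S3 Nx Ny Nz a b c (fun i j k => F i j k * G i j k) / h ^+ 2.
  move=> a b c F G; rewrite mulrC -S3Z; apply: S3_ext => *; rewrite -exprVn; ring.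
have := SD 0%N 1%N 1%N (fun i j k => u i.+1 j k - u i j k) (fun i j k => v i.+1 j k - v i j k).
have := SD 1%N 0%N 1%N (fun i j k => u i j.+1 k - u i j k) (fun i j k => v i j.+1 k - v i j k).
have := SD 1%N 1%N 0%N (fun i j k => u i j k.+1 - u i j k) (fun i j k => v i j k.+1 - v i j k).
rewrite /S3 /Dx /Dy /Dz /= => -> -> ->.
ring.
Qed.

Lemma normh2_ge0 (R : rcfType) Nx Ny Nz h (f : gridfun R) : 0 <= h ->
  0 <= normh2 Nx Ny Nz h f.
Proof. move=> h0; rewrite /normh2 iphE; apply: mulr_ge0; [exact: exprn_ge0| exact: S3_ge0]. Qed.

Lemma neumann_avg (R : rcfType) Nx Ny Nz (p n : gridfun R) :
  neumann Nx Ny Nz p -> neumann Nx Ny Nz n ->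
  neumann Nx Ny Nz (fun a b c => (p a b c + n a b c) / 2%:R).
Proof.
move=> [p1 [p2 p3]] [n1 [n2 n3]]; split; [|split].
- move=> j k J K; have [-> ->] := p1 j k J K; have [-> ->] := n1 j k J K; by [].
- move=> i k J K; have [-> ->] := p2 i k J K; have [-> ->] := n2 i k J K; by [].
- move=> i j J K; have [-> ->] := p3 i j J K; have [-> ->] := n3 i j J K; by [].
Qed.

(* phim = phi^{n-1}, phin = phi^n, phip = phi^{n+1}, mu = mu^{n+1/2},
   Q = Q^{n+1/2}; the index n >= 1 only labels time levels. *)
Theorem mainTheorem2 (R : rcfType) (lx ly lz : R) (Nx Ny Nz : nat) (h : R)
  (eps S dt : R) (g : gridfun R) (phim phin phip mu : gridfun R) (Q : R) :
  0 < lx -> 0 < ly -> 0 < lz ->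
  (0 < Nx)%N -> (0 < Ny)%N -> (0 < Nz)%N ->
  h = lx / Nx%:R -> h = ly / Ny%:R -> h = lz / Nz%:R ->
  0 < eps -> 0 < S -> 0 < dt ->
  (forall i j k, (1 <= i <= Nx)%N -> (1 <= j <= Ny)%N -> (1 <= k <= Nz)%N ->
     0 <= g i j k) ->
  neumann Nx Ny Nz phim -> neumann Nx Ny Nz phin ->
  neumann Nx Ny Nz phip -> neumann Nx Ny Nz mu ->
  let phis : gridfun R :=
    fun i j k => 3%:R / 2%:R * phin i j k - 1 / 2%:R * phim i j k in
  (forall i j k, (1 <= i <= Nx)%N -> (1 <= j <= Ny)%N -> (1 <= k <= Nz)%N ->
     (phip i j k - phin i j k) / dt = - (g i j k * mu i j k)) ->
  (forall i j k, (1 <= i <= Nx)%N -> (1 <= j <= Ny)%N -> (1 <= k <= Nz)%N ->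
     mu i j k = Q * (dFdw (phis i j k) / eps ^+ 2)
       - lapd h (fun a b c => (phip a b c + phin a b c) / 2%:R) i j k
       + S * ((phip i j k + phin i j k) / 2%:R - phis i j k)) ->
  iph Nx Ny Nz h (fun i j k => Fdw (phip i j k) - Fdw (phin i j k)) (one_grid R)
    = Q * iph Nx Ny Nz h (fun i j k => dFdw (phis i j k))
                         (fun i j k => phip i j k - phin i j k) ->
  let lhs :=
    1 / eps ^+ 2 *
      iph Nx Ny Nz h (fun i j k => Fdw (phip i j k) - Fdw (phin i j k)) (one_grid R)
    + 1 / 2%:R * (normgrad2 Nx Ny Nz h phip - normgrad2 Nx Ny Nz h phin)
    + S / 4%:R * (normh2 Nx Ny Nz h (fun i j k => phip i j k - phin i j k)
                  - normh2 Nx Ny Nz h (fun i j k => phin i j k - phim i j k)) in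
  let rhs :=
    - (dt * normh2 Nx Ny Nz h (fun i j k => Num.sqrt (g i j k) * mu i j k))
    - S / 4%:R * normh2 Nx Ny Nz h
        (fun i j k => phip i j k - 2%:R * phin i j k + phim i j k) in
  lhs = rhs /\ rhs <= 0 /\
  Etilde Nx Ny Nz h eps S phip phin <= Etilde Nx Ny Nz h eps S phin phim.
Proof.
move=> lx0 _ _ Nx0 _ _ hx _ _ eps0 S0 dt0 g0 Nm Nn Np Nmu phis E1 E2 E3 lhs rhs.
have h0 : 0 < h by rewrite hx divr_gt0 // ltr0n.
pose d : gridfun R := fun i j k => phip i j k - phin i j k.
pose u : gridfun R := fun a b c => (phip a b c + phin a b c) / 2%:R.
have Hu : neumann Nx Ny Nz u by exact: neumann_avg.
have dtne : dt != 0 by rewrite gt_eqF.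
have HM1 : iph Nx Ny Nz h mu d =
   - dt * normh2 Nx Ny Nz h (fun i j k => Num.sqrt (g i j k) * mu i j k).
  rewrite /normh2 !iphE mulrCA; congr (_ * _); rewrite -S3Z; apply: S3_ext => i j k I J K.
  have e : d i j k = - (g i j k * mu i j k) * dt.
    by rewrite -(E1 i j k I J K) /d mulfVK.
  rewrite e mulrCA -expr2 exprMn sqr_sqrtr ?g0 //; ring.
have HM2 : iph Nx Ny Nz h mu d =
   Q / eps ^+ 2 * iph Nx Ny Nz h (fun i j k => dFdw (phis i j k)) d
   - iph Nx Ny Nz h (lapd h u) d
   + S * iph Nx Ny Nz h (fun i j k => (phip i j k + phin i j k) / 2%:R - phis i j k) d.
  rewrite !iphE.
  have -> : S3 Nx Ny Nz 1 1 1 (fun i j k => mu i j k * d i j k) =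
     S3 Nx Ny Nz 1 1 1 (fun i j k => Q / eps ^+ 2 * (dFdw (phis i j k) * d i j k)
        - lapd h u i j k * d i j k
        + S * (((phip i j k + phin i j k) / 2%:R - phis i j k) * d i j k)).
    apply: S3_ext => i j k I J K; rewrite (E2 i j k I J K) /u; ring.
  rewrite S3D S3B !S3Z; ring.
have HL := sbp h d Hu.
have HG : ipe Nx Ny Nz h u d = (normgrad2 Nx Ny Nz h phip - normgrad2 Nx Ny Nz h phin) / 2%:R.
  rewrite /normgrad2 /ipe.
  have K : forall (a b c : nat) (D : gridfun R -> gridfun R) (sh : nat -> nat -> nat -> nat * nat * nat),
     (forall f i j k, D f i j k = (f (sh i j k).1.1 (sh i j k).1.2 (sh i j k).2 - f i j k) / h) ->
     S3 Nx Ny Nz a b c (fun i j k => D u i j k * D d i j k) =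
     (S3 Nx Ny Nz a b c (fun i j k => D phip i j k * D phip i j k)
      - S3 Nx Ny Nz a b c (fun i j k => D phin i j k * D phin i j k)) / 2%:R.
    move=> a b c D sh HD; rewrite [RHS]mulrC -S3B -S3Z; apply: S3_ext => i j k _ _ _.
    rewrite !HD /u /d; ring.
  have Kx := K 0%N 1%N 1%N (Dx h) (fun i j k => (i.+1, j, k)) (fun f i j k => erefl).
  have Ky := K 1%N 0%N 1%N (Dy h) (fun i j k => (i, j.+1, k)) (fun f i j k => erefl).
  have Kz := K 1%N 1%N 0%N (Dz h) (fun i j k => (i, j, k.+1)) (fun f i j k => erefl).
  move: Kx Ky Kz; rewrite /S3 => -> -> ->; ring.
have HC : iph Nx Ny Nz h (fun i j k => (phip i j k + phin i j k) / 2%:R - phis i j k) d =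
  (normh2 Nx Ny Nz h (fun i j k => phip i j k - phin i j k)
   - normh2 Nx Ny Nz h (fun i j k => phin i j k - phim i j k)
   + normh2 Nx Ny Nz h (fun i j k => phip i j k - 2%:R * phin i j k + phim i j k)) / 4%:R.
  rewrite /normh2 !iphE -!mulrBr -mulrDr -mulrA; congr (_ * _).
  rewrite -S3B -S3D mulrC -S3Z; apply: S3_ext => i j k _ _ _.
  by rewrite /d /phis; field.
have HF : iph Nx Ny Nz h (fun i j k => Fdw (phip i j k)) (one_grid R)
   - iph Nx Ny Nz h (fun i j k => Fdw (phin i j k)) (one_grid R)
   = iph Nx Ny Nz h (fun i j k => Fdw (phip i j k) - Fdw (phin i j k)) (one_grid R).
  rewrite !iphE -mulrBr -S3B; congr (_ * _); apply: S3_ext => *; rewrite /one_grid; ring.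
have epsne : eps ^+ 2 != 0 by rewrite expf_neq0 // gt_eqF.
have Hlr : lhs = rhs.
  rewrite /lhs /rhs E3 -/d.
  have X : Q / eps ^+ 2 * iph Nx Ny Nz h (fun i j k => dFdw (phis i j k)) d =
    - dt * normh2 Nx Ny Nz h (fun i j k => Num.sqrt (g i j k) * mu i j k)
    + iph Nx Ny Nz h (lapd h u) d
    - S * iph Nx Ny Nz h (fun i j k => (phip i j k + phin i j k) / 2%:R - phis i j k) d.
    rewrite -HM1 HM2; ring.
  have -> : 1 / eps ^+ 2 * (Q * iph Nx Ny Nz h (fun i j k => dFdw (phis i j k)) d)
    = Q / eps ^+ 2 * iph Nx Ny Nz h (fun i j k => dFdw (phis i j k)) d by ring.
  rewrite X HL HG HC; ring.
have Hr : rhs <= 0.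
  rewrite /rhs.
  have a1 : 0 <= dt * normh2 Nx Ny Nz h (fun i j k => Num.sqrt (g i j k) * mu i j k).
    by apply: mulr_ge0; [exact: ltW | apply: normh2_ge0; exact: ltW].
  have a2 : 0 <= S / 4%:R * normh2 Nx Ny Nz h (fun i j k => phip i j k - 2%:R * phin i j k + phim i j k).
    by apply: mulr_ge0; [apply: divr_ge0; [exact: ltW|exact: ler0n] | apply: normh2_ge0; exact: ltW].
  lra.
split; first exact: Hlr.
split; first exact: Hr.
have HE : Etilde Nx Ny Nz h eps S phip phin - Etilde Nx Ny Nz h eps S phin phim = lhs.
  rewrite /Etilde /lhs -HF; ring.
rewrite -subr_le0 HE Hlr; exact: Hr.
Qed.
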